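(* For every $P\in\mathbb{R}[X,Y]$ with $P(X,Y)=-P(Y,X)$, one has $\kappa(l_P)=l_Q$ where $Q(X,Y)=P(X,Y)-P(-X-Y,Y)+P(-X-Y,X)$.
   Context: $A=\mathbb{R}\langle x,y\rangle$; $L\subset A$ the free Lie algebra on $x,y$; $\operatorname{ad}_y(l)=[y,l]$. For $P=\sum c_{i,j}X^iY^j$ set $l_P=\sum c_{i,j}[\operatorname{ad}_y^i(x),\operatorname{ad}_y^j(x)]\in L$ (this identifies antisymmetric polynomials, $P(X,Y)=-P(Y,X)$, with the $x$-degree-$2$ part of $L$). $\operatorname{tr}$ is the projection $A\to A/\operatorname{span}\{ab-ba\}$, and $\partial_x:A/\operatorname{span}\{ab-ba\}\to A$ is $\operatorname{tr}(a_1\cdots a_n)\mapsto\sum_{i:\,a_i=x}a_{i+1}\cdots a_n a_1\cdots a_{i-1}$. The operator $\kappa:L\to L$ is $\kappa(l)=\partial_x(\operatorname{tr}(x\,l))$. *)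

(* Defs.v *)
From mathcomp Require Import all_boot all_algebra.
From mathcomp Require Import Rstruct.
From mathcomp Require Import mpoly.
Set Implicit Arguments. Unset Strict Implicit. Unset Printing Implicit Defensive.
Import GRing.Theory.
Local Open Scope ring_scope.

Notation RR := Rdefinitions.R.

(* Words in the letters x, y : true = x, false = y. *)
Definition word := seq bool.
Definition lx : bool := true.
Definition ly : bool := false.

(* Elements of A = R<x,y> are represented by formal finite linear combinations
   of words; two representatives denote the same element of A iff they have
   the same coefficient function [coefA]. *)
Definition ncpoly := seq (RR * word).
Definition coefA (a : ncpoly) (w : word) : RR := \sum_(t <- a | t.2 == w) t.1.

Definition addA (a b : ncpoly) : ncpoly := a ++ b.
Definition scaleA (c : RR) (a : ncpoly) : ncpoly := [seq (c * t.1, t.2) | t <- a].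
Definition oppA (a : ncpoly) : ncpoly := scaleA (-1) a.
Definition mulA (a b : ncpoly) : ncpoly :=
  [seq (s.1 * t.1, s.2 ++ t.2) | s <- a, t <- b].
Definition genA (v : bool) : ncpoly := [:: (1, [:: v])].

Definition brA (a b : ncpoly) : ncpoly := addA (mulA a b) (oppA (mulA b a)).
Definition ad_y (a : ncpoly) : ncpoly := brA (genA ly) a.
Definition adyx (i : nat) : ncpoly := iter i ad_y (genA lx).

(* l_P = sum c_{i,j} [ad_y^i x, ad_y^j x], where P = sum c_{i,j} X^i Y^j,
   X = 'X_0, Y = 'X_1 in {mpoly RR[2]}. *)
Definition lP (P : {mpoly RR[2]}) : ncpoly :=
  flatten [seq scaleA P@_m (brA (adyx (m ord0)) (adyx (m ord_max))) | m <- msupp P].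

(* d_x (tr (a_1 ... a_n)) = sum_{i : a_i = x} a_{i+1} ... a_n a_1 ... a_{i-1}
   (0-based positions below), extended linearly. *)
Definition dx_tr_word (w : word) : ncpoly :=
  [seq (1, drop i.+1 w ++ take i w) | i <- [seq i <- iota 0 (size w) | nth ly w i == lx]].
Definition dx_tr (a : ncpoly) : ncpoly :=
  flatten [seq scaleA t.1 (dx_tr_word t.2) | t <- a].

Definition kappa (l : ncpoly) : ncpoly := dx_tr (mulA (genA lx) l).

Definition Xv : {mpoly RR[2]} := 'X_ord0.
Definition Yv : {mpoly RR[2]} := 'X_ord_max.

(* Main.v *)
Require Import Defs.
From mathcomp Require Import all_boot all_algebra.
From mathcomp Require Import Rstruct.
From mathcomp Require Import mpoly.
From mathcomp Require Import ring zify.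
Set Implicit Arguments. Unset Strict Implicit. Unset Printing Implicit Defensive.
Import GRing.Theory.
Local Open Scope ring_scope.

Definition cx (w : word) : nat := count id w.
Definition word3 (p q r : nat) : word :=
  nseq p ly ++ lx :: nseq q ly ++ lx :: nseq r ly.

Lemma cx_nseq p : cx (nseq p ly) = 0%N.
Proof. by elim: p. Qed.

Lemma cx_word3 p q r : cx (word3 p q r) = 2%N.
Proof. by rewrite /cx /word3 !count_cat /= !count_cat /= !count_nseq /= !mul0n. Qed.

Lemma cx0 w : cx w = 0%N -> w = nseq (size w) ly.
Proof. by elim: w => [|[] w IH] //= H; rewrite -IH. Qed.

Lemma split_first w : (0 < cx w)%N -> exists p w', w = nseq p ly ++ lx :: w' /\ cx w' = (cx w).-1.
Proof.
elim: w => [|[] w IH] //= H.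
  by exists 0%N, w.
have [p [w' [-> H2]]] := IH H.
by exists p.+1, w'.
Qed.

Lemma cx2 w : cx w = 2%N -> exists p q r, w = word3 p q r.
Proof.
move=> H.
have [p [w1 [E1 H1]]] := split_first (ltac:(by rewrite H) : (0 < cx w)%N).
rewrite H /= in H1.
have [q [w2 [E2 H2]]] := split_first (ltac:(by rewrite H1) : (0 < cx w1)%N).
rewrite H1 /= in H2.
exists p, q, (size w2).
by rewrite E1 E2 /word3 -(cx0 H2).
Qed.

Lemma nseq_inj p p' s s' : nseq p ly ++ lx :: s = nseq p' ly ++ lx :: s' -> p = p' /\ s = s'.
Proof.
elim: p p' => [|p IH] [|p'] //=; try by case.
by case=> /IH [-> ->].
Qed.

Lemma word3_inj p q r p' q' r' : word3 p q r = word3 p' q' r' -> [/\ p = p', q = q' & r = r'].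
Proof.
rewrite /word3 => /nseq_inj [-> /nseq_inj [-> E]].
by split=> //; rewrite -(size_nseq r ly) E size_nseq.
Qed.

Lemma word3_eq p q r p' q' r' :
  (word3 p q r == word3 p' q' r') = ((p, q, r) == (p', q', r')).
Proof.
apply/eqP/eqP => [/word3_inj [-> -> ->] //| [-> -> ->] //].
Qed.

Notation M3 := {mpoly RR[3]}.
Definition i0 : 'I_3 := @Ordinal 3 0 isT.
Definition i1 : 'I_3 := @Ordinal 3 1 isT.
Definition i2 : 'I_3 := @Ordinal 3 2 isT.
Definition Xn (k : nat) : M3 := nth 0 [:: 'X_i0; 'X_i1; 'X_i2] k.

Fixpoint sm (k : nat) (w : word) : M3 :=
  match w with
  | [::] => 1
  | b :: w' => if b then sm k.+1 w' else Xn k * sm k w'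
  end.

Lemma sm_cat k w1 w2 : sm k (w1 ++ w2) = sm k w1 * sm (k + cx w1) w2.
Proof.
elim: w1 k => [|[] w1 IH] k /=; first by rewrite mul1r addn0.
  by rewrite IH /cx /= addnS.
by rewrite IH mulrA.
Qed.

Lemma sm_nseq_cat k p w : sm k (nseq p ly ++ w) = Xn k ^+ p * sm k w.
Proof. by elim: p => [|p IH] /=; rewrite ?mul1r // IH exprS mulrA. Qed.

Definition mono3 (p q r : nat) : M3 := Xn 0 ^+ p * Xn 1 ^+ q * Xn 2 ^+ r.

Lemma sm_word3 p q r : sm 0 (word3 p q r) = mono3 p q r.
Proof. by rewrite /word3 sm_nseq_cat /= (sm_nseq_cat 1) /= -[nseq r ly]cats0 (sm_nseq_cat 2) /= mulr1 mulrA. Qed.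

Definition mm (p q r : nat) : 'X_{1..3} := (U_(i0) *+ p + U_(i1) *+ q + U_(i2) *+ r)%MM.

Lemma mono3_X p q r : mono3 p q r = 'X_[mm p q r].
Proof. by rewrite /mono3 /mm !mpolyXD !mpolyXn. Qed.

Lemma mm_eq p q r p' q' r' : (mm p q r == mm p' q' r') = ((p, q, r) == (p', q', r')).
Proof.
apply/eqP/eqP => [E|[-> -> ->] //].
have E0 := congr1 (fun m : 'X_{1..3} => m i0) E.
have E1 := congr1 (fun m : 'X_{1..3} => m i1) E.
have E2 := congr1 (fun m : 'X_{1..3} => m i2) E.
move: E0 E1 E2; rewrite /= /mm !mnmDE !mulmnE !mnm1E /=.
rewrite !mul0n ?addn0 ?add0n !mul1n => -> -> -> //.
Qed.

Definition mono (w : word) : M3 := if cx w == 2%N then sm 0 w else 0.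
Definition ev (a : ncpoly) : M3 := \sum_(t <- a) t.1 *: mono t.2.

Lemma mono_coef w p q r : (mono w)@_(mm p q r) = (w == word3 p q r)%:R.
Proof.
rewrite /mono; case: eqP => [/cx2 [p' [q' [r' ->]]]|H].
  by rewrite sm_word3 mono3_X mcoeffX mm_eq word3_eq.
rewrite mcoeff0; case: eqP => // E; case: H; by rewrite E cx_word3.
Qed.

Lemma coefA_ev a p q r : coefA a (word3 p q r) = (ev a)@_(mm p q r).
Proof.
rewrite /coefA /ev raddf_sum big_mkcond /=; apply: eq_bigr => t _.
by rewrite mcoeffZ mono_coef; case: eqP => _; rewrite ?mulr1 ?mulr0.
Qed.

Definition allc (n : nat) (a : ncpoly) := all (fun t : RR * word => cx t.2 == n) a.

Lemma allc_cat n a b : allc n a -> allc n b -> allc n (Defs.addA a b).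
Proof. by rewrite /allc /Defs.addA all_cat => -> ->. Qed.

Lemma allc_scale n c a : allc n a -> allc n (scaleA c a).
Proof. by rewrite /allc /scaleA all_map. Qed.

Lemma allc_mul m n a b : allc m a -> allc n b -> allc (m + n) (Defs.mulA a b).
Proof.
rewrite /allc /Defs.mulA => /allP Ha /allP Hb.
apply/allP => t /allpairsP [[s u] [/Ha /eqP Hs /Hb /eqP Hu ->]] /=.
by rewrite /cx count_cat -/(cx _) -/(cx _) Hs Hu.
Qed.

Lemma allc_flatten n (s : seq ncpoly) : (forall a : ncpoly, a \in s -> allc n a) -> allc n (flatten s).
Proof.
elim: s => [|a s IH] //= H.
rewrite /allc all_cat; apply/andP; split; first by apply: H; rewrite inE eqxx.
by apply: IH => b Hb; apply: H; rewrite inE Hb orbT.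
Qed.

Lemma allc_br a b : allc 1 a -> allc 1 b -> allc 2 (brA a b).
Proof.
move=> Ha Hb; apply: allc_cat; first exact: (allc_mul Ha Hb).
by apply: allc_scale; exact: (allc_mul Hb Ha).
Qed.

Lemma allc_adyx i : allc 1 (adyx i).
Proof.
elim: i => [|i IH] //=.
rewrite /ad_y /brA; apply: allc_cat; first exact: (allc_mul (m := 0) _ IH).
by apply: allc_scale; rewrite -[1%N]addn0; exact: (allc_mul IH (n := 0) _).
Qed.

Lemma allc_lP P : allc 2 (lP P).
Proof.
apply: allc_flatten => a /mapP [m _ ->].
by apply: allc_scale; apply: allc_br; apply: allc_adyx.
Qed.

Lemma allc_dxw n w : cx w = n.+1 -> allc n (dx_tr_word w).
Proof.
move=> Hw; rewrite /allc /dx_tr_word all_map; apply/allP => i.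
rewrite mem_filter mem_iota add0n => /andP [/eqP Hn /andP [_ Hi]] /=.
have E := cat_take_drop i w; rewrite (drop_nth ly Hi) Hn in E.
move: Hw; rewrite -{1}E /cx !count_cat /= => Hw.
apply/eqP; lia.
Qed.

Lemma allc_dx n a : allc n.+1 a -> allc n (dx_tr a).
Proof.
move=> /allP Ha; apply: allc_flatten => b /mapP [t Ht ->].
by apply: allc_scale; apply: allc_dxw; apply/eqP; apply: Ha.
Qed.

Lemma allc_kappa l : allc 2 l -> allc 2 (kappa l).
Proof. by move=> H; apply: allc_dx; exact: (allc_mul (m := 1) _ H). Qed.

Lemma coefA_zero n a w : allc n a -> cx w != n -> coefA a w = 0.
Proof.
move=> /allP Ha Hw; rewrite /coefA big_seq_cond big1 // => t /andP [/Ha /eqP Ht /eqP E].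
by move: Hw; rewrite -E Ht eqxx.
Qed.

Definition evf (f : word -> M3) (a : ncpoly) : M3 := \sum_(t <- a) t.1 *: f t.2.

Lemma evf_cat f a b : evf f (Defs.addA a b) = evf f a + evf f b.
Proof. by rewrite /evf /Defs.addA big_cat. Qed.

Lemma evf_scale f c a : evf f (scaleA c a) = c *: evf f a.
Proof.
rewrite /evf /scaleA big_map scaler_sumr; apply: eq_bigr => t _.
by rewrite scalerA.
Qed.

Lemma evf_opp f a : evf f (oppA a) = - evf f a.
Proof. by rewrite /oppA evf_scale scaleN1r. Qed.

Lemma evf_flatten f (s : seq ncpoly) : evf f (flatten s) = \sum_(a <- s) evf f a.
Proof. by rewrite /evf big_flatten. Qed.

Lemma ev_mul a b : allc 1 a -> allc 1 b ->
  evf mono (Defs.mulA a b) = evf (sm 0) a * evf (sm 1) b.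
Proof.
move=> /allP Ha /allP Hb.
rewrite /evf /Defs.mulA big_allpairs_dep /= mulr_suml big_seq [RHS]big_seq.
apply: eq_bigr => s /Ha /eqP Hs.
rewrite mulr_sumr big_seq [RHS]big_seq; apply: eq_bigr => t /Hb /eqP Ht /=.
rewrite /mono /cx count_cat -!/(cx _) Hs Ht /= sm_cat Hs.
by rewrite -scalerAl -scalerAr scalerA.
Qed.

Lemma ev1_yl k a : evf (sm k) (Defs.mulA (genA ly) a) = Xn k * evf (sm k) a.
Proof.
rewrite /evf /Defs.mulA big_allpairs_dep /= big_cons big_nil addr0 mulr_sumr.
by apply: eq_bigr => t _ /=; rewrite mul1r scalerAr.
Qed.

Lemma ev1_yr k a : allc 1 a -> evf (sm k) (Defs.mulA a (genA ly)) = evf (sm k) a * Xn k.+1.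
Proof.
move=> /allP Ha.
rewrite /evf /Defs.mulA big_allpairs_dep /= mulr_suml big_seq [RHS]big_seq.
apply: eq_bigr => t /Ha /eqP Ht /=.
by rewrite big_cons big_nil addr0 /= mulr1 sm_cat Ht addn1 /= mulr1 scalerAl.
Qed.

Lemma ev1_adyx k i : evf (sm k) (adyx i) = (Xn k - Xn k.+1) ^+ i.
Proof.
elim: i => [|i IH].
  by rewrite /evf /= big_cons big_nil addr0 scale1r.
rewrite /adyx iterS -/(adyx i) /ad_y /brA evf_cat evf_opp ev1_yl ev1_yr ?allc_adyx //.
by rewrite IH exprS mulrBl [_ * Xn k.+1]mulrC.
Qed.

Lemma ev_br a b : allc 1 a -> allc 1 b ->
  evf mono (brA a b) = evf (sm 0) a * evf (sm 1) b - evf (sm 0) b * evf (sm 1) a.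
Proof.
by move=> Ha Hb; rewrite /brA evf_cat evf_opp !ev_mul.
Qed.

Definition A3 : M3 := Xn 0 - Xn 1.
Definition B3 : M3 := Xn 1 - Xn 2.

Lemma ev_lP P : evf mono (lP P) =
  \sum_(m <- msupp P) P@_m *: (A3 ^+ m ord0 * B3 ^+ m ord_max - A3 ^+ m ord_max * B3 ^+ m ord0).
Proof.
rewrite /lP evf_flatten big_map; apply: eq_bigr => m _.
by rewrite evf_scale ev_br ?allc_adyx // !ev1_adyx.
Qed.

Lemma comp2 (P : {mpoly RR[2]}) (a b : M3) :
  P \mPo [tuple a; b] = \sum_(m <- msupp P) P@_m *: (a ^+ m ord0 * b ^+ m ord_max).
Proof.
rewrite comp_mpolyE; apply: eq_bigr => m _; congr (_ *: _).
rewrite big_ord_recr big_ord_recr big_ord0 /=.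
have -> : widen_ord (leqnSn 1) ord_max = ord0 :> 'I_2 by apply: val_inj.
by rewrite mul1r.
Qed.

Definition FP (P : {mpoly RR[2]}) : M3 := (P \mPo [tuple A3; B3]) - (P \mPo [tuple B3; A3]).

Lemma ev_lP_F P : evf mono (lP P) = FP P.
Proof.
rewrite ev_lP /FP !comp2 -sumrB; apply: eq_bigr => m _.
by rewrite scalerBr [B3 ^+ _ * _]mulrC.
Qed.

Definition pos (w : word) := [seq i <- iota 0 (size w) | nth ly w i == lx].

Lemma pos_cons b w : pos (b :: w) = (if b then [:: 0%N] else [::]) ++ map (addn 1) (pos w).
Proof.
rewrite /pos /= -[1%N]addn0 iotaDl addn0 filter_map.
have -> : [seq i <- iota 0 (size w) | preim (addn 1) (fun i => nth ly (b :: w) i == lx) i]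
   = [seq i <- iota 0 (size w) | nth ly w i == lx].
  by apply: eq_filter => i /=.
by case: b.
Qed.

Lemma pos_nseq_cat p w : pos (nseq p ly ++ w) = map (addn p) (pos w).
Proof.
elim: p => [|p IH] /=; first by rewrite map_id_in // => i _; rewrite add0n.
rewrite pos_cons /= IH -map_comp; apply: eq_map => i /=.
by rewrite addnA add1n.
Qed.

Lemma pos_w3 p q r : pos (lx :: word3 p q r) = [:: 0%N; p.+1; (p + q).+2].
Proof.
rewrite /word3 -[nseq r ly]cats0 pos_cons pos_nseq_cat pos_cons pos_nseq_cat pos_cons pos_nseq_cat.
have -> : pos [::] = [::] by [].
rewrite /=; congr [:: _; _; _]; lia.
Qed.

Lemma dxw_w3 p q r : dx_tr_word (lx :: word3 p q r) =
  [:: (1, word3 p q r); (1, word3 q r p); (1, word3 r p q)].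
Proof.
rewrite /dx_tr_word -/(pos _) pos_w3 /=.
rewrite drop0 cats0; congr [:: _; (1, _); (1, _)].
  rewrite /word3 -add1n -drop_drop (drop_size_cat _ (size_nseq _ _)) /= drop0.
  by rewrite (take_size_cat _ (size_nseq _ _)) -catA.
have E : word3 p q r = (nseq p ly ++ lx :: nseq q ly) ++ lx :: nseq r ly.
  by rewrite /word3 -catA.
have Hs : size (nseq p ly ++ lx :: nseq q ly) = (p + q).+1.
  by rewrite size_cat /= !size_nseq addnS.
rewrite E -add1n -drop_drop (drop_size_cat _ Hs) /= drop0 (take_size_cat _ Hs).
by rewrite /word3.
Qed.

Definition c1 : 3.-tuple M3 := [tuple Xn 2; Xn 0; Xn 1].
Definition c2 : 3.-tuple M3 := [tuple Xn 1; Xn 2; Xn 0].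
Definition cyc (G : M3) : M3 := G + (G \mPo c1) + (G \mPo c2).

Lemma mono3_c1 p q r : mono3 p q r \mPo c1 = mono3 q r p.
Proof. rewrite /mono3 !rmorphM !rmorphXn /= !comp_mpolyXU /=. ring. Qed.

Lemma mono3_c2 p q r : mono3 p q r \mPo c2 = mono3 r p q.
Proof. rewrite /mono3 !rmorphM !rmorphXn /= !comp_mpolyXU /=. ring. Qed.

Lemma mono_w3 p q r : mono (word3 p q r) = mono3 p q r.
Proof. by rewrite /mono cx_word3 sm_word3. Qed.

Lemma cyc_sum (l : ncpoly) (f : word -> M3) :
  cyc (\sum_(t <- l) t.1 *: f t.2) = \sum_(t <- l) t.1 *: cyc (f t.2).
Proof.
rewrite /cyc !raddf_sum -!big_split /=; apply: eq_bigr => t _.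
by rewrite !comp_mpolyZ !scalerDr.
Qed.

Lemma ev_kappa l : allc 2 l -> evf mono (kappa l) = cyc (evf mono l).
Proof.
move=> /allP Hl.
rewrite /kappa /dx_tr /Defs.mulA /= cats0 evf_flatten !big_map /evf cyc_sum.
rewrite big_seq [RHS]big_seq; apply: eq_bigr => t /Hl /eqP /cx2 [p [q [r E]]].
rewrite -/(evf _ _) evf_scale mul1r E dxw_w3 /evf !big_cons big_nil /= !scale1r addr0.
by rewrite !mono_w3 /cyc mono3_c1 mono3_c2 addrA.
Qed.

Lemma comp2k k (P : {mpoly RR[2]}) (a b : {mpoly RR[k]}) :
  P \mPo [tuple a; b] = \sum_(m <- msupp P) P@_m *: (a ^+ m ord0 * b ^+ m ord_max).
Proof.
rewrite comp_mpolyE; apply: eq_bigr => m _; congr (_ *: _).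
rewrite big_ord_recr big_ord_recr big_ord0 /=.
have -> : widen_ord (leqnSn 1) ord_max = ord0 :> 'I_2 by apply: val_inj.
by rewrite mul1r.
Qed.

Lemma comp_comp2 k j (P : {mpoly RR[2]}) (a b : {mpoly RR[k]}) (c : k.-tuple {mpoly RR[j]}) :
  (P \mPo [tuple a; b]) \mPo c = P \mPo [tuple a \mPo c; b \mPo c].
Proof.
rewrite !comp2k raddf_sum; apply: eq_bigr => m _.
by rewrite /= comp_mpolyZ rmorphM !rmorphXn.
Qed.

Definition C3 : M3 := Xn 2 - Xn 0.

Lemma XvC k (a b : {mpoly RR[k]}) : Xv \mPo [tuple a; b] = a.
Proof. by rewrite /Xv comp_mpolyXU. Qed.
Lemma YvC k (a b : {mpoly RR[k]}) : Yv \mPo [tuple a; b] = b.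
Proof. by rewrite /Yv comp_mpolyXU. Qed.

Lemma final_id (P : {mpoly RR[2]}) :
  (P \mPo [tuple Yv; Xv]) = - P ->
  cyc (FP P) = FP (P - (P \mPo [tuple - Xv - Yv; Yv]) + (P \mPo [tuple - Xv - Yv; Xv])).
Proof.
move=> H.
have anti : forall a b : M3, P \mPo [tuple b; a] = - (P \mPo [tuple a; b]).
  move=> a b; rewrite -comp_mpolyN -H comp_comp2 XvC YvC //.
have eAB : - A3 - B3 = C3 by rewrite /A3 /B3 /C3; ring.
have eBA : - B3 - A3 = C3 by rewrite /A3 /B3 /C3; ring.
have A1 : A3 \mPo c1 = C3 by rewrite /A3 /C3 rmorphB /= !comp_mpolyXU.
have B1 : B3 \mPo c1 = A3 by rewrite /A3 /B3 rmorphB /= !comp_mpolyXU.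
have A2 : A3 \mPo c2 = B3 by rewrite /A3 /B3 rmorphB /= !comp_mpolyXU.
have B2 : B3 \mPo c2 = C3 by rewrite /B3 /C3 rmorphB /= !comp_mpolyXU.
rewrite /cyc /FP !rmorphB /= !comp_comp2 A1 B1 A2 B2.
rewrite !comp_mpolyD ?comp_mpolyB ?comp_mpolyN !comp_comp2 ?comp_mpolyB ?comp_mpolyD ?comp_mpolyN !XvC !YvC eAB eBA.
rewrite (anti A3 B3) (anti C3 A3) (anti B3 C3).
ring.
Qed.

Theorem mainTheorem17 (P : {mpoly RR[2]}) :
  (P \mPo [tuple Yv; Xv]) = - P ->
  forall w : word,
    coefA (kappa (lP P)) w =
    coefA (lP (P - (P \mPo [tuple - Xv - Yv; Yv]) + (P \mPo [tuple - Xv - Yv; Xv]))) w.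
Proof.
move=> H w; case: (eqVneq (cx w) 2%N) => Hw.
  have [p [q [r ->]]] := cx2 Hw.
  rewrite !coefA_ev /ev -!/(evf mono _) ev_kappa ?allc_lP // !ev_lP_F final_id //.
rewrite (coefA_zero (allc_kappa (allc_lP P)) Hw).
by rewrite (coefA_zero (allc_lP _) Hw).
Qed.
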